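(* Let $X=(\mathbb R^2,\|\cdot\|_2,\mathcal L^2)$ and $S=\{(x_1,x_2)\in\mathbb R^2: x_1\in[0,1],\ x_2=0\}$. Then for each $\theta\in(1,2)$ there exists a sequence of measures $\{\mathfrak m_k\}\in\mathfrak M_\theta(S)\setminus\mathfrak M^{str}_\theta(S)$.
   Context: Balls are closed: $B_r(x)=\{y:\|y-x\|_2\le r\}$; $\mu=\mathcal L^2$ is Lebesgue measure. A measure means a nonzero Borel regular locally finite measure. For $\theta\ge0$ and a closed nonempty $S$, $\{\mathfrak m_k\}_{k=0}^\infty\in\mathfrak M_\theta(S)$ if there is $\epsilon\in(0,1)$ such that: (M1) $\operatorname{supp}\mathfrak m_k=S$ for all $k\in\mathbb N_0$; (M2) there is $C_1>0$ with $\mathfrak m_k(B_r(x))\le C_1\mu(B_r(x))/r^\theta$ for all $k$, $x\in X$, $r\in(0,\epsilon^k]$; (M3) there is $C_2>0$ with $\mathfrak m_k(B_r(x))\ge C_2\mu(B_r(x))/r^\theta$ for all $k$, $x\in S$, $r\in[\epsilon^k,1]$; (M4) $\mathfrak m_k=w_k\mathfrak m_0$ with $w_k\in L^\infty(\mathfrak m_0)$ and $C_3>0$ such that $\epsilon^{\theta j}/C_3\le w_k(x)/w_{k+j}(x)\le C_3$ for $\mathfrak m_0$-a.e. $x\in S$ and all $k,j\in\mathbb N_0$. $\{\mathfrak m_k\}\in\mathfrak M^{str}_\theta(S)$ if moreover (M5) for every Borel $E\subset S$, $\limsup_{k\to\infty}\mathfrak m_k(B_{\epsilon^k}(x)\cap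 E)/\mathfrak m_k(B_{\epsilon^k}(x))>0$ for $\mathfrak m_0$-a.e. $x\in E$. *)

(* Defs.v *)
From HB Require Import structures.
From mathcomp Require Import all_boot all_order all_algebra.
From mathcomp Require Import all_classical all_reals all_analysis.
Set Implicit Arguments. Unset Strict Implicit. Unset Printing Implicit Defensive.
Import Order.TTheory GRing.Theory Num.Theory.
Import numFieldNormedType.Exports.
Local Open Scope classical_set_scope.
Local Open Scope ring_scope.

(* The plane R^2 = R * R, with the product (= Borel) sigma-algebra. *)

Definition eball (R : realType) (x : R * R) (r : R) : set (R * R) :=
  [set y | (y.1 - x.1) ^+ 2 + (y.2 - x.2) ^+ 2 <= r ^+ 2 /\ 0 <= r].

Definition leb2 (R : realType) : set (R * R) -> \bar R :=
  ((@lebesgue_measure R) \x (@lebesgue_measure R))%E.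

Definition segS (R : realType) : set (R * R) :=
  [set x | 0 <= x.1 <= 1 /\ x.2 = 0].

(* "A measure": nonzero, locally finite (Borel regularity is automatic for a
   measure defined on the Borel sigma-algebra). *)
Definition is_measure2 (R : realType) (m : {measure set (R * R) -> \bar R}) :=
  m setT != 0%E /\
  (forall x : R * R, exists2 r : R, 0 < r & (m (eball x r) < +oo)%E).

Definition msupp (R : realType) (m : {measure set (R * R) -> \bar R}) : set (R * R) :=
  [set x | forall r : R, 0 < r -> (0 < m (eball x r))%E].

Definition condM (R : realType) (theta eps : R) (S : set (R * R))
  (m : nat -> {measure set (R * R) -> \bar R}) : Prop :=
  (forall k, msupp (m k) = S) /\
  (exists2 C1 : R, 0 < C1 &
     forall k (x : R * R) (r : R), 0 < r -> r <= eps ^+ k ->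
       (m k (eball x r) <= (C1 / r `^ theta)%:E * @leb2 R (eball x r))%E) /\
  (exists2 C2 : R, 0 < C2 &
     forall k (x : R * R) (r : R), S x -> eps ^+ k <= r -> r <= 1 ->
       ((C2 / r `^ theta)%:E * @leb2 R (eball x r) <= m k (eball x r))%E) /\
  (exists w : nat -> R * R -> R,
     (forall k, measurable_fun setT (w k)) /\
     (forall k, exists M : R, {ae m 0%N, forall x, `|w k x| <= M}) /\
     (forall k (A : set (R * R)), measurable A ->
        m k A = (\int[m 0%N]_(x in A) (w k x)%:E)%E) /\
     (exists2 C3 : R, 0 < C3 &
        forall k j : nat, {ae m 0%N, forall x, S x ->
          eps `^ (theta * j%:R) / C3 <= w k x / w (k + j)%N x <= C3})).

Definition condM5 (R : realType) (eps : R) (S : set (R * R))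
  (m : nat -> {measure set (R * R) -> \bar R}) : Prop :=
  forall E : set (R * R), measurable E -> E `<=` S ->
    {ae m 0%N, forall x, E x ->
      (0 < limn_esup (fun k => (fine (m k (eball x (eps ^+ k) `&` E))
                               / fine (m k (eball x (eps ^+ k))))%:E))%E}.

Definition inM (R : realType) (theta : R) (S : set (R * R))
  (m : nat -> {measure set (R * R) -> \bar R}) : Prop :=
  (forall k, is_measure2 (m k)) /\
  exists eps : R, 0 < eps < 1 /\ condM theta eps S m.

Definition inMstr (R : realType) (theta : R) (S : set (R * R))
  (m : nat -> {measure set (R * R) -> \bar R}) : Prop :=
  (forall k, is_measure2 (m k)) /\
  exists eps : R, 0 < eps < 1 /\ condM theta eps S m /\ condM5 eps S m.

(* Main.v *)
Require Import Defs.
From HB Require Import structures.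
From mathcomp Require Import all_boot all_order all_algebra.
From mathcomp Require Import all_classical all_reals all_analysis.
From mathcomp Require Import lra ring.
Import Order.TTheory GRing.Theory Num.Theory.
Import numFieldNormedType.Exports.
Local Open Scope classical_set_scope.
Local Open Scope ring_scope.

Section cantor.
Context {R : realType} (b : R).
Hypothesis b0 : 0 < b.
Hypothesis b2 : 2 * b < 1.

Definition dg (t : R) : R := if 2^-1 <= t then 1 else 0.

Fixpoint fn (n : nat) (t : R) : R :=
  if n is m.+1 then (1 - b) * dg t + b * fn m (2 * t - dg t) else 0.

Definition fc (t : R) : R := limn (fun n => fn n t).

Lemma b1 : b < 1. Proof. have := b0; have := b2; lra. Qed.

Lemma dg_ge0 t : 0 <= dg t. Proof. by rewrite /dg; case: ifP. Qed.
Lemma dg_le1 t : dg t <= 1. Proof. by rewrite /dg; case: ifP. Qed.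

Lemma fn_bnd n t : 0 <= fn n t <= 1.
Proof.
elim: n t => [|n IH] t /=; first by rewrite lexx ler01.
have := IH (2 * t - dg t); have := dg_ge0 t; have := dg_le1 t; have := b1; have := b0.
move=> h0 h1 h2 h3 /andP[h4 h5]; apply/andP; split; nra.
Qed.

Lemma fn_incr n t : fn n t <= fn n.+1 t.
Proof.
elim: n t => [|n IH] t /=; first by have /andP[] := fn_bnd 1 t.
rewrite lerD2l; apply: ler_wpM2l; [exact: ltW|exact: IH].
Qed.

Lemma fn_nd t : {homo (fun n => fn n t) : n m / (n <= m)%N >-> n <= m}.
Proof. by apply/nondecreasing_seqP => n; exact: fn_incr. Qed.

Lemma fn_cvg t : (fun n => fn n t) @ \oo --> fc t.
Proof.
have h : cvgn (fun n => fn n t).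
  apply: cvgP; apply: nondecreasing_cvgn; first exact: fn_nd.
  by exists 1 => _ [n _ <-]; have /andP[] := fn_bnd n t.
exact: h.
Qed.

Lemma fc_bnd t : 0 <= fc t <= 1.
Proof.
apply/andP; split.
  apply: (limr_ge (fn_cvg t)); apply: nearW => n; by have /andP[] := fn_bnd n t.
apply: (limr_le (fn_cvg t)); apply: nearW => n; by have /andP[] := fn_bnd n t.
Qed.

Lemma fc_FE t : fc t = (1 - b) * dg t + b * fc (2 * t - dg t).
Proof.
have h1 : (fun n => fn n.+1 t) @ \oo --> fc t.
  by rewrite (cvg_shiftS (fun n => fn n t)); exact: fn_cvg.
have h2 : (fun n => fn n.+1 t) @ \oo --> (1 - b) * dg t + b * fc (2 * t - dg t).
  apply: cvgD; first exact: cvg_cst.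
  apply: cvgMr; exact: fn_cvg.
exact: (cvg_unique _ h1 h2).
Qed.


Lemma dg_mf : measurable_fun setT dg.
Proof.
apply: measurable_fun_ifT; last 2 first.
- exact: measurable_cst.
- exact: measurable_cst.
by apply: measurable_realfun.measurable_fun_ler => //; exact: measurable_cst.
Qed.

Lemma fn_mf n : measurable_fun setT (fn n).
Proof.
elim: n => [|n IH] /=; first exact: measurable_cst.
apply: measurable_realfun.measurable_funD.
  by apply: measurable_realfun.measurable_funM; [exact: measurable_cst|exact: dg_mf].
apply: measurable_realfun.measurable_funM; first exact: measurable_cst.
apply: (measurableT_comp IH).
apply: measurable_realfun.measurable_funB; last exact: dg_mf.
by apply: measurable_realfun.measurable_funM; [exact: measurable_cst|exact: measurable_id].
Qed.

Lemma fc_mf : measurable_fun setT fc.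
Proof.
apply: (measurable_realfun.measurable_fun_cvg (h := fn)) => [m|x _]; first exact: fn_mf.
exact: fn_cvg.
Qed.

Lemma fc_jump n : forall t u, 0 <= t -> u <= 1 -> 2 <= 2 ^+ n * (u - t) ->
  (1 - 2 * b) * b ^+ n <= fc u - fc t.
Proof.
elim: n => [|n IH] t u t0 u1 h.
  by move: h; rewrite expr0 mul1r; move=> h; exfalso; lra.
have hb := b0; have hb1 := b1; have hb2 := b2.
have bn1 : b ^+ n <= 1 by apply: exprn_ile1; lra.
have bn0 : 0 <= b ^+ n by apply: exprn_ge0; lra.
have hn : 0 <= 2 ^+ n :> R by apply: exprn_ge0.
rewrite (fc_FE u) (fc_FE t) /dg.
case: ifP => hu; case: ifP => ht.
- rewrite exprS.
  have := IH (2 * t - 1) (2 * u - 1); move=> /(_ _ _ _) ih.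
  have : (1 - 2 * b) * b ^+ n <= fc (2 * u - 1) - fc (2 * t - 1).
    apply: ih; try lra.
    by move: h; rewrite exprS; nra.
  nra.
- have := fc_bnd (2 * u - 1); have := fc_bnd (2 * t - 0).
  move=> /andP[h1 h2] /andP[h3 h4]; rewrite exprS.
  have e1 : 0 <= b * fc (2 * u - 1) by apply: mulr_ge0; lra.
  have e2 : b * fc (2 * t - 0) <= b by rewrite ler_piMr //; lra.
  have e3 : b * b ^+ n <= 1 by nra.
  have e4 : (1 - 2 * b) * (b * b ^+ n) <= 1 - 2 * b by rewrite ler_piMr //; nra.
  lra.
- exfalso; move: h; rewrite exprS; nra.
- rewrite exprS.
  have : (1 - 2 * b) * b ^+ n <= fc (2 * u - 0) - fc (2 * t - 0).
    apply: IH; try lra.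
    by move: h; rewrite exprS; nra.
  nra.
Qed.


Definition Pset (x1 r : R) : set R := [set t | 0 <= t <= 1 /\ `|fc t - x1| <= r].

Lemma Pset_mb x1 r : measurable (Pset x1 r).
Proof.
have -> : Pset x1 r = `[0, 1] `&` (fc @^-1` `[x1 - r, x1 + r]).
  apply/seteqP; split => t /=.
    move=> [h1 h2]; split; first by rewrite in_itv.
    by rewrite in_itv /=; move: h2; rewrite ler_norml; lra.
  move=> [] ; rewrite !in_itv /= => h1 h2; split => //.
  by rewrite ler_norml; lra.
apply: measurableI; first exact: measurable_itv.
by rewrite -[X in measurable X]setTI; apply: fc_mf => //; exact: measurable_itv.
Qed.

Lemma nub n x1 r : 2 * r < (1 - 2 * b) * b ^+ n ->
  (lebesgue_measure (Pset x1 r) <= (4 / 2 ^+ n)%:E)%E.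
Proof.
move=> hr.
have [[t0 Pt0]|nP] := pselect (exists t0, Pset x1 r t0); last first.
  have -> : Pset x1 r = set0.
    by apply/seteqP; split => t // Pt; apply: nP; exists t.
  by rewrite measure0 lee_fin; apply: divr_ge0 => //; exact: exprn_ge0.
have hn : 0 < 2 ^+ n :> R by apply: exprn_gt0.
have sub : Pset x1 r `<=` `[t0 - 2 / 2 ^+ n, t0 + 2 / 2 ^+ n].
  move=> t Pt; rewrite /= in_itv /=.
  move: Pt0 Pt => [/andP[a1 a2] a3] [/andP[c1 c2] c3].
  have key : forall u v, Pset x1 r u -> Pset x1 r v -> u <= v -> v - u < 2 / 2 ^+ n.
    move=> u v [/andP[u1 u2] u3] [/andP[v1 v2] v3] uv.
    rewrite ltNge; apply/negP => H.
    have H2 : 2 <= 2 ^+ n * (v - u).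
      by move: H; rewrite ler_pdivrMr // mulrC.
    have := @fc_jump n u v u1 v2 H2.
    move: u3 v3; rewrite !ler_norml => u3 v3; lra.
  have P0 : Pset x1 r t0 by split => //; apply/andP.
  have P1 : Pset x1 r t by split => //; apply/andP.
  have [tt0|t0t] := leP t t0.
    have := key _ _ P1 P0 tt0; lra.
  have := key _ _ P0 P1 (ltW t0t); lra.
apply: (le_trans (@le_measure _ _ _ lebesgue_measure _ _ _ _ sub)).
- by rewrite inE; exact: Pset_mb.
- by rewrite inE; exact: measurable_itv.

have E := @lebesgue_measure_itv R `[t0 - 2 / 2 ^+ n, t0 + 2 / 2 ^+ n]%R.
rewrite [X in (X <= _)%E]E /= lte_fin.
have h2 : 0 < 2 / 2 ^+ n :> R by apply: divr_gt0.
rewrite ifT; last by lra.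
by rewrite -EFinD lee_fin; lra.
Qed.


Variable s : R.
Hypothesis s0 : 0 < s.
Hypothesis bs : b `^ s = 2^-1.

Lemma Pset_le1 x1 r : (lebesgue_measure (Pset x1 r) <= 1)%E.
Proof.
have sub : Pset x1 r `<=` `[0, 1] by move=> t [h _]; rewrite /= in_itv.
apply: (le_trans (@le_measure _ _ _ lebesgue_measure _ _ _ _ sub)).
- by rewrite inE; exact: Pset_mb.
- by rewrite inE; exact: measurable_itv.
have E := @lebesgue_measure_itv R `[0, 1]%R.
rewrite [X in (X <= _)%E]E /= lte_fin ltr01 -EFinB lee_fin; lra.
Qed.

Lemma nub_ind n x1 r : 0 < r -> (1 - 2 * b) * b ^+ n <= 2 * r ->
  (lebesgue_measure (Pset x1 r) <= (8 * (2 * r / (1 - 2 * b)) `^ s)%:E)%E.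
Proof.
have hb := b0; have hb2 := b2.
have c0 : 0 < 1 - 2 * b by lra.
elim: n r => [|n IH] r r0 h.
  apply: (le_trans (Pset_le1 x1 r)); rewrite lee_fin.
  have a1 : 1 <= 2 * r / (1 - 2 * b) by rewrite ler_pdivlMr //; lra.
  have := ler_powR a1 (ltW s0); rewrite powRr0; lra.
have [h'|h'] := leP ((1 - 2 * b) * b ^+ n) (2 * r); first exact: IH.
apply: (le_trans (nub n x1 r h')); rewrite lee_fin.
have e1 : b ^+ n.+1 <= 2 * r / (1 - 2 * b).
  by rewrite ler_pdivlMr // mulrC.
have e2 : (b ^+ n.+1) `^ s <= (2 * r / (1 - 2 * b)) `^ s.
  apply: ge0_ler_powR => //; first exact: ltW.
  - by rewrite nnegrE; apply: exprn_ge0; exact: ltW.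
  - by rewrite nnegrE; apply: divr_ge0; lra.
have e3 : (b ^+ n.+1) `^ s = 2^-1 ^+ n.+1.
  by rewrite -powR_mulrn ?(ltW hb)// powRAC bs powR_mulrn // invr_ge0.
rewrite e3 in e2.
have -> : 4 / 2 ^+ n = 8 * 2^-1 ^+ n.+1 :> R.
  by rewrite exprVn exprS; field; apply: lt0r_neq0; apply: exprn_gt0.
by rewrite ler_pM2l.
Qed.

Lemma nub2 x1 r : 0 < r ->
  (lebesgue_measure (Pset x1 r) <= (8 * (2 * r / (1 - 2 * b)) `^ s)%:E)%E.
Proof.
move=> r0.
have hb := b0; have hb2 := b2.
have bl1 : `|b| < 1 by rewrite ger0_norm; lra.
have /cvgrPdist_lt /(_ (2 * r / (1 - 2 * b))) := cvg_expr bl1.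
move=> /(_ _) [].
  by apply: divr_gt0; lra.
move=> N _ HN; apply: (@nub_ind N x1 r) => //.
have := HN N (leqnn N); rewrite sub0r normrN ger0_norm; last by apply: exprn_ge0; lra.
by rewrite ltr_pdivlMr; [rewrite mulrC; lra|lra].
Qed.


Fixpoint Vs n : seq R :=
  if n is m.+1 then map (fun c => b * c) (Vs m) ++ map (fun c => (1 - b) + b * c) (Vs m)
  else [:: 0].

Lemma size_Vs n : size (Vs n) = (2 ^ n)%N.
Proof. by elim: n => //= n IH; rewrite size_cat !size_map IH expnS mul2n addnn. Qed.

Definition Ul (l : seq R) (e : R) : set R := \big[setU/set0]_(c <- l) `[c - e, c + e]%classic.

Lemma Ul_mb l e : measurable (Ul l e).
Proof.
elim: l => [|c l IH]; rewrite /Ul ?big_nil ?big_cons //.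
by apply: measurableU => //; exact: measurable_itv.
Qed.

Lemma Ul_le l e : 0 <= e -> (lebesgue_measure (Ul l e) <= (size l)%:R%:E * (2 * e)%:E)%E.
Proof.
move=> e0; elim: l => [|c l IH]; rewrite /Ul ?big_nil ?big_cons.
  by rewrite measure0 mul0e.
apply: (le_trans (measureU2 lebesgue_measure (measurable_itv _) (Ul_mb l e))).
have -> : ((size (c :: l))%:R%:E * (2 * e)%:E = (2 * e)%:E + (size l)%:R%:E * (2 * e)%:E)%E.
  by rewrite /= -!EFinM -EFinD; congr (_%:E); rewrite -addn1 natrD; ring.
apply: leeD => //.
have E := @lebesgue_measure_itv R `[c - e, c + e]%R.
rewrite [X in (X <= _)%E]E /=; case: ifP => _.
  by rewrite -EFinB lee_fin; lra.
by rewrite lee_fin; lra.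
Qed.

Lemma Ul_mem l e c y : c \in l -> `|y - c| <= e -> Ul l e y.
Proof.
elim: l => [|c' l IH] //; rewrite in_cons /Ul big_cons => /orP[/eqP <-|cl] h.
  by left; rewrite /= in_itv /=; move: h; rewrite ler_norml; lra.
by right; exact: IH.
Qed.

Lemma fc_Vs n t : exists2 c, c \in Vs n & `|fc t - c| <= b ^+ n.
Proof.
have hb := b0.
elim: n t => [|n IH] t.
  exists 0; first by rewrite inE.
  by rewrite subr0 expr0 ger0_norm; have /andP[] := fc_bnd t.
have [c cV hc] := IH (2 * t - dg t).
exists ((1 - b) * dg t + b * c).
  rewrite /= mem_cat /dg; case: ifP => _.
    by apply/orP; right; apply/mapP; exists c => //; rewrite mulr1.
  by apply/orP; left; apply/mapP; exists c => //; rewrite mulr0 add0r.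
have -> : fc t - ((1 - b) * dg t + b * c) = b * (fc (2 * t - dg t) - c).
  by rewrite (fc_FE t); ring.
by rewrite normrM ger0_norm ?(ltW hb) // exprS ler_pM2l.
Qed.

Definition Kn n : set R := Ul (Vs n) (b ^+ n).
Definition Kset : set R := \bigcap_n Kn n.

Lemma Kset_mb : measurable Kset.
Proof. by apply: bigcap_measurableType => k _; exact: Ul_mb. Qed.

Lemma fc_K t : Kset (fc t).
Proof. by move=> n _; have [c cV hc] := fc_Vs n t; exact: (Ul_mem (Vs n) (b ^+ n) c (fc t) cV hc). Qed.

Lemma Kset_null : lebesgue_measure Kset = 0%E.
Proof.
have hb := b0; have hb2 := b2.
apply/eqP; rewrite eq_le measure_ge0 andbT.
have H n : (lebesgue_measure Kset <= (2 * (2 * b) ^+ n)%:E)%E.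
  have sub : Kset `<=` Kn n by move=> y; apply; done.
  apply: (le_trans (@le_measure _ _ _ lebesgue_measure _ _ _ _ sub)).
  - by rewrite inE; exact: Kset_mb.
  - by rewrite inE; exact: Ul_mb.
  apply: (le_trans (Ul_le (Vs n) (b ^+ n) _)); first by apply: exprn_ge0; lra.
  rewrite size_Vs -EFinM lee_fin natrX exprMn; rewrite le_eqVlt; apply/orP; left; apply/eqP; ring.
have KS : (lebesgue_measure Kset <= 2%:E)%E by have := H 0%N; rewrite expr0 mulr1.
have : lebesgue_measure Kset \is a fin_num.
  by rewrite ge0_fin_numE ?measure_ge0 // (le_lt_trans KS) // ltry.
move=> /fineK <-; rewrite lee_fin.
have c1 : `|2 * b| < 1 by rewrite ger0_norm; lra.
have cv : (fun n => 2 * (2 * b) ^+ n) @ \oo --> (0 : R).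
  by rewrite -(mulr0 2); apply: cvgMr; exact: cvg_expr.
apply: (ler_cvg_to (cvg_cst _) cv); apply: nearW => n.
have := H n; rewrite -lee_fin fineK //.
by rewrite ge0_fin_numE ?measure_ge0 // (le_lt_trans KS) // ltry.
Qed.

End cantor.

Set Implicit Arguments. Unset Strict Implicit.

Section pf.
Context {R : realType}.
Variables (m : {measure set (measurableTypeR R) -> \bar R}) (g : R -> R * R).
Hypothesis mg : measurable_fun (setT : set (measurableTypeR R)) g.

Lemma pf0 : pushforward m g set0 = 0%E.
Proof. by rewrite /pushforward preimage_set0 measure0. Qed.

Lemma pf_ge0 A : (0 <= pushforward m g A)%E.
Proof. exact: measure_ge0. Qed.

Lemma pf_sa : semi_sigma_additive (pushforward m g).
Proof.
move=> F mF tF mUF; rewrite /pushforward preimage_bigcup.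
apply: measure_semi_sigma_additive.
- by move=> n; rewrite -[X in measurable X]setTI; exact: mg.
- apply/trivIsetP => /= i j _ _ ij; rewrite -preimage_setI.
  by move/trivIsetP : tF => /(_ _ _ _ _ ij) ->//; rewrite preimage_set0.
- by rewrite -preimage_bigcup -[X in measurable X]setTI; exact: mg.
Qed.
End pf.

Section setup.
Context {R : realType}.

Definition emb (t : R) : R * R := (t, 0).
Lemma emb_mf : measurable_fun (setT : set (measurableTypeR R)) emb.
Proof.
apply: measurable_fun_pair; [exact: measurable_id|exact: measurable_cst].
Qed.

Definition lam01 := mrestr (@lebesgue_measure R) (measurable_itv `[0, 1]).

Definition LS := pushforward lam01 emb.
HB.instance Definition _ := isMeasure.Build _ _ _ LS
  (@pf0 _ lam01 emb) (@pf_ge0 _ lam01 emb emb_mf) (@pf_sa _ lam01 emb emb_mf).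

Variable b : R.
Hypothesis b0 : 0 < b.
Hypothesis b2 : 2 * b < 1.

Definition embf (t : R) : R * R := (fc b t, 0).
Lemma embf_mf : measurable_fun (setT : set (measurableTypeR R)) embf.
Proof.
apply: measurable_fun_pair; [exact: fc_mf|exact: measurable_cst].
Qed.

Definition NS := pushforward lam01 embf.
HB.instance Definition _ := isMeasure.Build _ _ _ NS
  (@pf0 _ lam01 embf) (@pf_ge0 _ lam01 embf embf_mf) (@pf_sa _ lam01 embf embf_mf).

Definition mk (c : {nonneg R}) : {measure set (R * R) -> \bar R} :=
  measure_add (mscale c LS) NS.

Lemma mkE c A : mk c A = (c%:num%:E * LS A + NS A)%E.
Proof. exact: measure_addE. Qed.


Lemma LSE A : LS A = lebesgue_measure (emb @^-1` A `&` `[0, 1]).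
Proof. by []. Qed.
Lemma NSE A : NS A = lebesgue_measure (embf @^-1` A `&` `[0, 1]).
Proof. by []. Qed.

Lemma lam_le1 (X : set R) : measurable X -> X `<=` `[0, 1] ->
  (lebesgue_measure X <= 1)%E.
Proof.
move=> mX sub.
apply: (le_trans (@le_measure _ _ _ lebesgue_measure _ _ _ _ sub)).
- by rewrite inE.
- by rewrite inE; exact: measurable_itv.
have E := @lebesgue_measure_itv R `[0, 1]%R.
rewrite [X in (X <= _)%E]E /= lte_fin ltr01 -EFinB lee_fin; lra.
Qed.

Lemma pre_mb (g : R -> R * R) (A : set (R * R)) :
  measurable_fun (setT : set (measurableTypeR R)) g -> measurable A ->
  measurable (g @^-1` A `&` `[0, 1]).
Proof.
move=> mg mA; apply: measurableI; last exact: measurable_itv.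
by rewrite -[X in measurable X]setTI; exact: mg.
Qed.

Lemma LS_le1 A : measurable A -> (LS A <= 1)%E.
Proof.
by move=> mA; rewrite LSE; apply: lam_le1; [exact: pre_mb emb_mf mA|move=> t []].
Qed.

Lemma NS_le1 A : measurable A -> (NS A <= 1)%E.
Proof.
by move=> mA; rewrite NSE; apply: lam_le1; [exact: pre_mb embf_mf mA|move=> t []].
Qed.

Lemma NS_setT : NS setT = 1%E.
Proof.
rewrite NSE preimage_setT setTI.
have E := @lebesgue_measure_itv R `[0, 1]%R.
by rewrite E /= lte_fin ltr01 -EFinB subr0.
Qed.

Lemma eball_mb (x : R * R) r : measurable (eball x r).
Proof.
have [r0|r0] := leP 0 r; last first.
  have -> : eball x r = set0.
    by apply/seteqP; split => y // [_ h]; lra.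
  exact: measurable0.
have -> : eball x r = (fun y : R * R => (y.1 - x.1) ^+ 2 + (y.2 - x.2) ^+ 2) @^-1` `]-oo, r ^+ 2].
  apply/seteqP; split => y /=.
    by move=> [h _]; rewrite in_itv /=.
  by rewrite in_itv /= => h; split.
rewrite -[X in measurable X]setTI.
have mq : measurable_fun setT (fun y : R * R => (y.1 - x.1) ^+ 2 + (y.2 - x.2) ^+ 2).
  apply: measurable_realfun.measurable_funD.
    apply: measurable_realfun.measurable_funX.
    apply: measurable_realfun.measurable_funB; [exact: measurable_fst|exact: measurable_cst].
  apply: measurable_realfun.measurable_funX.
  apply: measurable_realfun.measurable_funB; [exact: measurable_snd|exact: measurable_cst].
by apply: mq => //; exact: measurable_itv.
Qed.



Lemma lam_le (X Y : set R) : measurable X -> measurable Y -> X `<=` Y ->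
  (lebesgue_measure X <= lebesgue_measure Y)%E.
Proof.
move=> mX mY XY; apply: (@le_measure _ _ _ lebesgue_measure _ _ _ _ XY); by rewrite inE.
Qed.

Lemma lam_itv_le (a c : R) : a <= c -> (lebesgue_measure (`[a, c] : set R) <= (c - a)%:E)%E.
Proof.
move=> ac; have E := @lebesgue_measure_itv R `[a, c]%R.
rewrite E /= lte_fin; case: ifP => h; first by rewrite -EFinB.
by rewrite lee_fin; lra.
Qed.

Lemma lam_itv_ge (a c : R) : a <= c -> ((c - a)%:E <= lebesgue_measure (`[a, c] : set R))%E.
Proof.
move=> ac; have E := @lebesgue_measure_itv R `[a, c]%R.
rewrite E /= lte_fin; case: ifP => h; first by rewrite -EFinB.
by rewrite lee_fin; move/negbT: h; rewrite -leNgt; lra.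
Qed.

Lemma LS_ball_le x r : 0 <= r -> (LS (eball x r) <= (2 * r)%:E)%E.
Proof.
move=> r0; rewrite LSE.
have sub : emb @^-1` eball x r `&` `[0, 1] `<=` `[x.1 - r, x.1 + r].
  move=> t [[/= h _] _]; rewrite /= in_itv /=.
  have u0 : 0 <= (0 - x.2) ^+ 2 := sqr_ge0 _.
  have h2 : (t - x.1) ^+ 2 <= r ^+ 2 by lra.
  apply/andP; split; nra.
apply: (le_trans (lam_le (pre_mb emb_mf (eball_mb x r)) (measurable_itv _) sub)).
apply: (le_trans (lam_itv_le _)); first lra.
rewrite lee_fin; lra.
Qed.

Lemma LS_ball_ge x r : segS x -> 0 < r -> r <= 1 -> (r%:E <= LS (eball x r))%E.
Proof.
move=> [/andP[x0 x1] x2] r0 r1; rewrite LSE.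
pose a := if x.1 + r <= 1 then x.1 else 1 - r.
have sub : `[a, a + r] `<=` emb @^-1` eball x r `&` `[0, 1].
  move=> t; rewrite /= !in_itv /= => /andP[h1 h2].
  rewrite /a in h1 h2 *; case: ifP => hh in h1 h2 *.
    split; last by apply/andP; split; lra.
    split; last lra.
    rewrite /= x2 subrr expr0n /= addr0; nra.
  move/negbT: hh; rewrite -ltNge => hh.
  split; last by apply/andP; split; lra.
  split; last lra.
  rewrite /= x2 subrr expr0n /= addr0; nra.
apply: (le_trans _ (lam_le (measurable_itv _) (pre_mb emb_mf (eball_mb x r)) sub)).
apply: (le_trans _ (lam_itv_ge _)); last lra.
rewrite lee_fin; lra.
Qed.

Lemma NS_ball_le x r : (NS (eball x r) <= lebesgue_measure (Pset b x.1 r))%E.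
Proof.
rewrite NSE.
have sub : embf @^-1` eball x r `&` `[0, 1] `<=` Pset b x.1 r.
  move=> t [[/= h r0]]; rewrite /= in_itv /= => ht; split => //.
  have u0 : 0 <= (0 - x.2) ^+ 2 := sqr_ge0 _.
  have h2 : (fc b t - x.1) ^+ 2 <= r ^+ 2 by lra.
  rewrite ler_norml; apply/andP; split; nra.
apply: (lam_le (pre_mb embf_mf (eball_mb x r)) (Pset_mb b b0 b2 x.1 r) sub).
Qed.


Lemma lam_itv (a c : R) : a <= c -> lebesgue_measure (`[a, c] : set R) = (c - a)%:E.
Proof.
move=> ac; apply/eqP; rewrite eq_le lam_itv_le // lam_itv_ge //.
Qed.

Lemma leb2_box (a1 c1 a2 c2 : R) : a1 <= c1 -> a2 <= c2 ->
  leb2 (`[a1, c1] `*` `[a2, c2]) = ((c1 - a1) * (c2 - a2))%:E.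
Proof.
move=> h1 h2; rewrite /leb2 product_measure1E; try exact: measurable_itv.
transitivity (lebesgue_measure (`[a1, c1] : set R) * lebesgue_measure (`[a2, c2] : set R))%E.
  by [].
by rewrite !lam_itv // -EFinM.
Qed.

Lemma leb2_mb (A : set (R * R)) (B : set (R * R)) : measurable A -> measurable B ->
  A `<=` B -> (@leb2 R A <= @leb2 R B)%E.
Proof.
move=> mA mB AB; apply: (@le_measure _ _ _ ((@lebesgue_measure R) \x (@lebesgue_measure R))%E _ _ _ _ AB); by rewrite inE.
Qed.

Lemma leb2_ball_ge (x : R * R) r : 0 <= r -> ((r ^+ 2)%:E <= @leb2 R (eball x r))%E.
Proof.
move=> r0.
have sub : `[x.1 - r / 2, x.1 + r / 2] `*` `[x.2 - r / 2, x.2 + r / 2] `<=` eball x r.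
  move=> y; rewrite /= !in_itv /= => -[/andP[h1 h2] /andP[h3 h4]]; split => //.
  nra.
have mQ : measurable (`[x.1 - r / 2, x.1 + r / 2] `*` `[x.2 - r / 2, x.2 + r / 2]).
  by apply: measurableX; exact: measurable_itv.
apply: (le_trans _ (leb2_mb mQ (eball_mb x r) sub)).
rewrite leb2_box; [|lra|lra].
rewrite lee_fin; nra.
Qed.

Lemma leb2_ball_le (x : R * R) r : 0 <= r -> (@leb2 R (eball x r) <= (4 * r ^+ 2)%:E)%E.
Proof.
move=> r0.
have sub : eball x r `<=` `[x.1 - r, x.1 + r] `*` `[x.2 - r, x.2 + r].
  move=> y [h _]; rewrite /= !in_itv /=.
  have u1 : 0 <= (y.1 - x.1) ^+ 2 := sqr_ge0 _.
  have u2 : 0 <= (y.2 - x.2) ^+ 2 := sqr_ge0 _.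
  split; apply/andP; split; nra.
apply: (le_trans (leb2_mb (eball_mb x r) _ sub)).
  by apply: measurableX; exact: measurable_itv.
rewrite leb2_box; [|lra|lra].
rewrite lee_fin; nra.
Qed.


Definition Eset : set (R * R) := (Kset b `&` `[0, 1]) `*` [set (0 : R)].

Lemma Eset_mb : measurable Eset.
Proof.
apply: measurableX; last exact: measurable_set1.
apply: measurableI; [exact: Kset_mb|exact: measurable_itv].
Qed.

Lemma Eset_S : Eset `<=` segS (R:=R).
Proof. by move=> y [[_ h] h2]; split => //; move: h; rewrite /= in_itv. Qed.

Lemma embf_E t : Eset (embf t).
Proof.
split => //; split; first exact: (fc_K b b0 b2 t).
by rewrite /= in_itv; exact: (fc_bnd b b0 b2 t).
Qed.

Lemma LS_E0 : LS Eset = 0%E.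
Proof.
apply/eqP; rewrite eq_le measure_ge0 andbT LSE -(Kset_null b b0 b2).
apply: lam_le.
- by apply: pre_mb; [exact: emb_mf|exact: Eset_mb].
- exact: Kset_mb.
by move=> t [[[hk _] _] _].
Qed.

Lemma LS_AE0 A : measurable A -> LS (A `&` Eset) = 0%E.
Proof.
move=> mA; apply/eqP; rewrite eq_le measure_ge0 andbT -LS_E0.
apply: (@le_measure _ _ _ LS (A `&` Eset) Eset); rewrite ?inE.
- exact: measurableI mA Eset_mb.
- exact: Eset_mb.
- by move=> y [].
Qed.

Lemma NS_AE A : NS (A `&` Eset) = NS A.
Proof.
rewrite !NSE; congr (lebesgue_measure _).
apply/seteqP; split => t /=; first by move=> [[h _] h'].
by move=> [h h']; split => //; split => //; exact: embf_E.
Qed.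

Lemma NS_AnE A : NS (A `&` ~` Eset) = 0%E.
Proof.
rewrite NSE; have -> : embf @^-1` (A `&` ~` Eset) `&` `[0, 1] = set0.
  by apply/seteqP; split => t // [[_ /= h] _]; apply: h; exact: embf_E.
exact: measure0.
Qed.

Lemma LS_AnE A : measurable A -> LS (A `&` ~` Eset) = LS A.
Proof.
move=> mA; have mAn : measurable (A `&` ~` Eset).
  by apply: measurableI => //; apply: measurableC; exact: Eset_mb.
apply/eqP; rewrite eq_le; apply/andP; split.
  by apply: (@le_measure _ _ _ LS (A `&` ~` Eset) A); rewrite ?inE // => y [].
have eA : A = (A `&` ~` Eset) `|` (A `&` Eset).
  apply/seteqP; split => y.
    by move=> Ay; have [Ey|nEy] := pselect (Eset y); [right|left].
  by move=> [[]|[]].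
rewrite [in X in (LS X <= _)%E]eA.
apply: (le_trans (measureU2 LS mAn (measurableI _ _ mA Eset_mb))).
have h : (LS (A `&` Eset) <= 0)%E by rewrite LS_AE0.
by rewrite -[leRHS]adde0; apply: leeD.
Qed.

End setup.

Section main.
Context {R : realType} (th : R).
Hypothesis th1 : 1 < th.
Hypothesis th2 : th < 2.

Definition sx : R := (3 - th) / 2.
Lemma sx0 : 0 < sx. Proof. rewrite /sx; have := th2; lra. Qed.
Lemma sx_gt : 2 - th < sx. Proof. rewrite /sx; have := th1; lra. Qed.

Definition bb : R := (2^-1) `^ (sx^-1).
Lemma bb0 : 0 < bb. Proof. by apply: powR_gt0. Qed.
Lemma bbs : bb `^ sx = 2^-1.
Proof.
rewrite /bb -powRrM mulVf ?powRr1 //; last by apply: lt0r_neq0; exact: sx0.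
Qed.
Lemma bb2 : 2 * bb < 1.
Proof.
have s0 := sx0; have st := sx_gt; have h1 := th1; have h2 := th2.
have e : sx^-1 = 1 + (sx^-1 - 1) by ring.
have sl : 1 < sx^-1.
  rewrite invf_gt1 //; rewrite /sx; lra.
have : (2^-1 : R) `^ (sx^-1 - 1) < 1.
  rewrite lt_neqAle; apply/andP; split.
    have hh : (2^-1 : R) < 1 by rewrite invf_lt1 //; lra.
    have hh0 : (0 : R) < 2^-1 by rewrite invr_gt0.
    rewrite powR_eq1 (lt_eqF hh) ltNge (ltW hh0) /= gt_eqF //; lra.
  have a01 : (0 < (2^-1 : R)) && ((2^-1 : R) <= 1) by apply/andP; split; [rewrite invr_gt0|rewrite invf_le1 //; lra].
  have hle : (0 : R) <= sx^-1 - 1 by lra.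
  by have := ger_powR a01 hle; rewrite powRr0.
move=> H; rewrite /bb e powRD; last by apply/implyP => _; rewrite invr_neq0.
rewrite powRr1; last by rewrite invr_ge0.
have : (0 : R) <= 2^-1 `^ (sx^-1 - 1) by apply: powR_ge0.
have -> : (2 : R) * (2^-1 * 2^-1 `^ (sx^-1 - 1)) = 2^-1 `^ (sx^-1 - 1).
  by rewrite mulrA mulfV ?mul1r.
lra.
Qed.


Lemma powRinv (r a : R) : 0 < r -> (r^-1) `^ a = r `^ (- a).
Proof.
move=> r0; rewrite powRN.
have : (r^-1 * r) `^ a = 1 by rewrite mulVf ?powR1 //; exact: lt0r_neq0.
rewrite powRM ?invr_ge0 ?(ltW r0) // => h.
have h0 : r `^ a != 0 by apply: lt0r_neq0; exact: powR_gt0.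
by rewrite -[LHS]mulr1 -(mulfV h0) mulrA h mul1r.
Qed.

Lemma pw2 (r : R) : 0 < r -> r `^ (2 - th) = r * (r^-1) `^ (th - 1).
Proof.
move=> r0; rewrite powRinv // (_ : 2 - th = 1 + - (th - 1)); last by ring.
rewrite powRD ?powRr1 ?(ltW r0) //.
by apply/implyP => _; exact: lt0r_neq0.
Qed.

Lemma pw3 (r : R) : 0 < r -> r `^ (2 - th) = r ^+ 2 / r `^ th.
Proof.
move=> r0; rewrite powRB; last by apply/implyP => _; exact: lt0r_neq0.
by rewrite (_ : (2 : R) = 2%:R) // powR_mulrn // ltW.
Qed.

Definition ck (k : nat) : R := (2 ^+ k) `^ (th - 1).
Lemma ck_gt0 k : 0 < ck k. Proof. by apply: powR_gt0; exact: exprn_gt0. Qed.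
Definition ckn k : {nonneg R} := NngNum (ltW (ck_gt0 k)).

Lemma ck_le k r : 0 < r -> r <= 2^-1 ^+ k -> ck k * r <= r `^ (2 - th).
Proof.
move=> r0 rk; rewrite pw2 //.

rewrite [ck k * r]mulrC (ler_pM2l r0).
have h1 := th1.
apply: ge0_ler_powR; first lra.
- by rewrite nnegrE; apply: exprn_ge0.
- by rewrite nnegrE invr_ge0 ltW.
by rewrite -(invrK (2 ^+ k)) lef_pV2 ?posrE ?invr_gt0 ?exprn_gt0 // -exprVn.
Qed.

Lemma ck_ge k r : 0 < r -> 2^-1 ^+ k <= r -> r `^ (2 - th) <= ck k * r.
Proof.
move=> r0 rk; rewrite pw2 // [ck k * r]mulrC (ler_pM2l r0).
have h1 := th1.
apply: ge0_ler_powR; first lra.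
- by rewrite nnegrE invr_ge0 ltW.
- by rewrite nnegrE; apply: exprn_ge0.
by rewrite -(invrK (2 ^+ k)) lef_pV2 ?posrE ?invr_gt0 ?exprn_gt0 // -exprVn.
Qed.

Definition mseq (k : nat) : {measure set (R * R) -> \bar R} := mk bb0 bb2 (ckn k).

Definition NSb := NS bb.
HB.instance Definition _ := isMeasure.Build _ _ _ NSb
  (@pf0 _ lam01 (embf bb)) (@pf_ge0 _ lam01 (embf bb) (embf_mf bb0 bb2))
  (@pf_sa _ lam01 (embf bb) (embf_mf bb0 bb2)).

Lemma mseqE k A : mseq k A = ((ck k)%:E * LS A + NSb A)%E.
Proof. exact: mkE. Qed.


Lemma ck0 : ck 0 = 1. Proof. by rewrite /ck expr0 powR1. Qed.

Lemma mseq_le k A : measurable A -> (mseq k A <= (ck k + 1)%:E)%E.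
Proof.
move=> mA; rewrite mseqE EFinD; apply: leeD; last exact: (NS_le1 bb0 bb2 mA).
rewrite -[leRHS]mule1; apply: lee_wpmul2l; first by rewrite lee_fin (ltW (ck_gt0 k)).
exact: LS_le1.
Qed.

Lemma NS_segS : NSb (@segS R) = 1%E.
Proof.
rewrite -(NS_setT bb) /NSb !NSE; congr (lebesgue_measure _).
apply/seteqP; split => t [h1 h2]; split => //.
exact: (Eset_S (embf_E bb0 bb2 t)).
Qed.

Lemma mseq_ge_NS k A : (NSb A <= mseq k A)%E.
Proof.
rewrite mseqE -[leLHS]add0e; apply: leeD => //.
by apply: mule_ge0; [rewrite lee_fin (ltW (ck_gt0 k))|exact: measure_ge0].
Qed.

Lemma mseq_ge_LS k A : ((ck k)%:E * LS A <= mseq k A)%E.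
Proof.
by rewrite mseqE -[leLHS]adde0; apply: leeD => //; exact: measure_ge0.
Qed.

Lemma mseq_ism k : is_measure2 (mseq k).
Proof.
split.
  have h : (0 < mseq k setT)%E.
    apply: (@lt_le_trans _ _ 1%E) => //.
    rewrite -(NS_setT bb); exact: mseq_ge_NS.
  by rewrite gt_eqF.
move=> x; exists 1 => //; apply: (le_lt_trans (mseq_le k (eball_mb x 1))).
exact: ltry.
Qed.

Lemma away (x : R * R) : ~ segS x -> exists2 r : R, 0 < r & forall y, segS y -> ~ eball x r y.
Proof.
move=> nS.
have [h2|h2] := eqVneq x.2 0.
  have [h0|h0] := ltP x.1 0.
    exists (- x.1 / 2); first lra.
    move=> y [/andP[y0 y1] y2] [hh _]; have u : 0 <= (y.2 - x.2) ^+ 2 := sqr_ge0 _.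
    nra.
  have [h1|h1] := ltP 1 x.1.
    exists ((x.1 - 1) / 2); first lra.
    move=> y [/andP[y0 y1] y2] [hh _]; have u : 0 <= (y.2 - x.2) ^+ 2 := sqr_ge0 _.
    nra.
  by exfalso; apply: nS; split => //; apply/andP.
exists (`|x.2| / 2); first by apply: divr_gt0 => //; rewrite normr_gt0.
move=> y [_ y2] [hh _]; have u : 0 <= (y.1 - x.1) ^+ 2 := sqr_ge0 _.
have ax : 0 < `|x.2| by rewrite normr_gt0.
have e : (y.2 - x.2) ^+ 2 = `|x.2| ^+ 2 by rewrite y2 sub0r sqrrN real_normK // num_real.
rewrite e in hh; nra.
Qed.

Lemma supp k : msupp (mseq k) = @segS R.
Proof.
apply/seteqP; split => x.
  move=> hx; apply: contrapT => nS.
  have [r r0 hr] := away nS.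
  have := hx r r0; rewrite mseqE.
  have -> : LS (eball x r) = 0%E.
    rewrite LSE; have -> : emb @^-1` eball x r `&` `[0, 1] = set0.
      apply/seteqP; split => t // [h1 h2]; apply: (hr (emb t)) h1.
      by split => //; move: h2; rewrite /= in_itv.
    exact: measure0.
  have -> : NSb (eball x r) = 0%E.
    rewrite /NSb NSE; have -> : embf bb @^-1` eball x r `&` `[0, 1] = set0.
      apply/seteqP; split => t // [h1 h2]; apply: (hr (embf bb t)) h1.
      exact: (Eset_S (embf_E bb0 bb2 t)).
    exact: measure0.
  by rewrite mule0 adde0 ltxx.
move=> Sx r r0.
pose r' := Num.min r 1.
have r'0 : 0 < r' by rewrite lt_min r0 ltr01.
have r'1 : r' <= 1 by rewrite ge_min lexx orbT.
have r'r : r' <= r by rewrite ge_min lexx.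
have sub : eball x r' `<=` eball x r.
  move=> y [h _]; split; last exact: ltW.
  apply: (le_trans h); rewrite ler_sqr ?nnegrE //; exact: ltW.
apply: (lt_le_trans _ (mseq_ge_LS k (eball x r))).
apply: mule_gt0; first by rewrite lte_fin ck_gt0.
have h1 := LS_ball_ge Sx r'0 r'1.
have h2 : (LS (eball x r') <= LS (eball x r))%E.
  by apply: (@le_measure _ _ _ LS); rewrite ?inE //; exact: eball_mb.
by apply: (lt_le_trans _ (le_trans h1 h2)); rewrite lte_fin.
Qed.


Definition Kc : R := 8 * (2 / (1 - 2 * bb)) `^ sx.
Lemma Kc_ge0 : 0 <= Kc. Proof. by apply: mulr_ge0 => //; exact: powR_ge0. Qed.

Lemma NSb_ball x r : 0 < r -> (NSb (eball x r) <= (Kc * r `^ sx)%:E)%E.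
Proof.
move=> r0; apply: (le_trans (NS_ball_le bb0 bb2 x r)).
apply: (le_trans (nub2 bb bb0 bb2 sx sx0 bbs x.1 r r0)).
have hb := bb2.
rewrite lee_fin /Kc (_ : 2 * r / (1 - 2 * bb) = 2 / (1 - 2 * bb) * r); last by rewrite mulrAC.
rewrite powRM ?mulrA //; last exact: ltW.
by apply: divr_ge0 => //; lra.
Qed.

Lemma rpow_le (r : R) : 0 < r -> r <= 1 -> r `^ sx <= r `^ (2 - th).
Proof.
move=> r0 r1; apply: ger_powR; first by rewrite r0 r1.
exact: ltW sx_gt.
Qed.

Lemma M2 : exists2 C1 : R, 0 < C1 &
  forall k (x : R * R) (r : R), 0 < r -> r <= 2^-1 ^+ k ->
    (mseq k (eball x r) <= (C1 / r `^ th)%:E * @leb2 R (eball x r))%E.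
Proof.
exists (2 + Kc); first by have := Kc_ge0; lra.
move=> k x r r0 rk.
have r1 : r <= 1 by apply: (le_trans rk); apply: exprn_ile1; rewrite ?invr_ge0 ?invf_le1 //; lra.
have hpt : 0 < r `^ th by apply: powR_gt0.
rewrite mseqE.
apply: (@le_trans _ _ ((ck k * (2 * r))%:E + (Kc * r `^ sx)%:E)%E).
  apply: leeD; last exact: NSb_ball.
  rewrite EFinM; apply: lee_wpmul2l; first by rewrite lee_fin (ltW (ck_gt0 k)).
  exact: LS_ball_le (ltW r0).
apply: (@le_trans _ _ ((2 + Kc) / r `^ th * r ^+ 2)%:E); last first.
  rewrite EFinM; apply: lee_wpmul2l.
    by rewrite lee_fin; apply: divr_ge0; [have := Kc_ge0; lra|exact: ltW].
  exact: leb2_ball_ge (ltW r0).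
rewrite -EFinD lee_fin.
have e : (2 + Kc) / r `^ th * r ^+ 2 = (2 + Kc) * r `^ (2 - th).
  by rewrite pw3 // mulrAC mulrA.
rewrite e.
have h1 := ck_le r0 rk.
have h2 := rpow_le r0 r1.
have := Kc_ge0.
nra.
Qed.


Lemma M3 : exists2 C2 : R, 0 < C2 &
  forall k (x : R * R) (r : R), segS x -> 2^-1 ^+ k <= r -> r <= 1 ->
    ((C2 / r `^ th)%:E * @leb2 R (eball x r) <= mseq k (eball x r))%E.
Proof.
exists (4^-1) => //.
move=> k x r Sx rk r1.
have r0 : 0 < r by apply: (lt_le_trans _ rk); apply: exprn_gt0; rewrite invr_gt0.
have hpt : 0 < r `^ th by apply: powR_gt0.
apply: (le_trans _ (mseq_ge_LS k _)).
apply: (@le_trans _ _ ((4^-1 / r `^ th) * (4 * r ^+ 2))%:E).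
  rewrite [in X in (_ <= X)%E]EFinM; apply: lee_wpmul2l; last exact: leb2_ball_le (ltW r0).
  by rewrite lee_fin; apply: divr_ge0 => //; exact: ltW.
have e : 4^-1 / r `^ th * (4 * r ^+ 2) = r `^ (2 - th).
  by rewrite pw3 // mulrAC mulrA mulVf // mul1r mulrC.
rewrite e.
apply: (@le_trans _ _ (ck k * r)%:E); first by rewrite lee_fin; exact: ck_ge.
rewrite EFinM; apply: lee_wpmul2l; first by rewrite lee_fin (ltW (ck_gt0 k)).
exact: LS_ball_ge.
Qed.


Definition wk (k : nat) (y : R * R) : R := if y \in Eset bb then 1 else ck k.

Lemma wk_mf k : measurable_fun setT (wk k).
Proof.
apply: measurable_fun_ifT; [|exact: measurable_cst|exact: measurable_cst].
apply: (measurable_fun_bool true).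
rewrite setTI (_ : _ @^-1` _ = Eset bb); first exact: Eset_mb.
by apply/seteqP; split => y /= h; [exact: set_mem h|exact: mem_set h].
Qed.

Lemma wk_int k A : measurable A ->
  mseq k A = (\int[mseq 0%N]_(x in A) (wk k x)%:E)%E.
Proof.
move=> mA.
have mE := Eset_mb bb.
have mAE : measurable (A `&` Eset bb) by exact: measurableI.
have mAnE : measurable (A `&` ~` Eset bb) by apply: measurableI => //; exact: measurableC.
have eA : A = (A `&` Eset bb) `|` (A `&` ~` Eset bb).
  apply/seteqP; split => y.
    by move=> Ay; have [Ey|nEy] := pselect (Eset bb y); [left|right].
  by move=> [[]|[]].
rewrite [in RHS]eA ge0_integral_setU //; first last.
- by rewrite disj_set2E; apply/eqP/seteqP; split => y // [[_ h1] [_ h2]].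
- move=> y _; rewrite lee_fin /wk; case: ifP => _ //; exact: ltW (ck_gt0 k).
- by apply/measurable_realfun.measurable_EFinP; apply: (measurable_funS measurableT) => //; exact: wk_mf.
rewrite (@eq_integral _ _ _ _ (A `&` Eset bb) (cst 1%E)); last first.
  by move=> y; rewrite inE => -[_ Ey]; rewrite /wk mem_set.
rewrite (@eq_integral _ _ _ _ (A `&` ~` Eset bb) (cst (ck k)%:E)); last first.
  move=> y; rewrite inE => -[_ nEy]; rewrite /wk ifF //.
  by apply/negbTE/negP; rewrite inE.
rewrite !integral_cst // mul1e !mseqE ck0 !mul1e.
rewrite (LS_AE0 bb0 bb2 mA) (LS_AnE bb0 bb2 mA).
rewrite /NSb (NS_AE bb0 bb2 A) (NS_AnE bb0 bb2 A) add0e adde0.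
by rewrite addeC.
Qed.


Lemma ck_ratio k j : ck k / ck (k + j) = (2^-1) `^ (j%:R * (th - 1)).
Proof.
rewrite /ck exprD -powRN -powRinv; last by apply: mulr_gt0; exact: exprn_gt0.
rewrite -powRM ?invr_ge0 ?mulr_ge0 ?exprn_ge0 //.
rewrite invfM mulrA mulfV ?mul1r; last by apply: lt0r_neq0; exact: exprn_gt0.
by rewrite powRrM powR_mulrn ?invr_ge0 // exprVn.
Qed.

Lemma half_pow_le (a c : R) : 0 <= a -> a <= c -> (2^-1 : R) `^ c <= 2^-1 `^ a.
Proof.
move=> a0 ac; apply: ger_powR => //.
by rewrite invr_gt0 /= invf_le1 //; lra.
Qed.

Lemma half_pow_le1 (c : R) : 0 <= c -> (2^-1 : R) `^ c <= 1.
Proof. by move=> c0; have := half_pow_le (lexx 0) c0; rewrite powRr0. Qed.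

Lemma wk_ratio k j x : segS x ->
  2^-1 `^ (th * j%:R) / 1 <= wk k x / wk (k + j)%N x <= 1.
Proof.
move=> _; rewrite divr1 /wk.
have h1 := th1.
have j0 : (0 : R) <= j%:R by [].
have p1 : (2^-1 : R) `^ (th * j%:R) <= 1.
  by apply: half_pow_le1; apply: mulr_ge0 => //; lra.
case: ifP => _.
  by rewrite divr1 p1 lexx.
rewrite ck_ratio; apply/andP; split.
  by apply: half_pow_le; [apply: mulr_ge0 => //; lra| rewrite mulrC; apply: ler_wpM2r => //; lra].
by apply: half_pow_le1; apply: mulr_ge0 => //; lra.
Qed.

Lemma condM_ok : condM th (2^-1) (@segS R) mseq.
Proof.
split; first exact: supp.
split; first exact: M2.
split; first exact: M3.
exists wk; split; first exact: wk_mf.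
split.
  move=> k; exists (1 + ck k); apply: aeW => x; rewrite /wk.
  have := ck_gt0 k; case: ifP => _ h; rewrite ger0_norm; lra.
split; first by move=> k A mA; exact: wk_int.
exists 1 => //; move=> k j; apply: aeW => x; exact: wk_ratio.
Qed.


Definition gam : R := sx - (2 - th).
Lemma gam0 : 0 < gam. Proof. by rewrite /gam; have := sx_gt; lra. Qed.

Lemma lim0 (eps C2 : R) (x : R * R) : 0 < eps -> eps < 1 -> 0 < C2 ->
  (forall k (x : R * R) (r : R), segS x -> eps ^+ k <= r -> r <= 1 ->
     ((C2 / r `^ th)%:E * @leb2 R (eball x r) <= mseq k (eball x r))%E) ->
  Eset bb x ->
  limn_esup (fun k => (fine (mseq k (eball x (eps ^+ k) `&` Eset bb))
                      / fine (mseq k (eball x (eps ^+ k))))%:E) = 0%E.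
Proof.
move=> e0 e1 C2p HM3 Ex.
pose u k := fine (mseq k (eball x (eps ^+ k) `&` Eset bb)) / fine (mseq k (eball x (eps ^+ k))).
pose q := eps `^ gam.
have q0 : 0 <= q by apply: powR_ge0.
have q1 : q < 1.
  rewrite /q lt_neqAle; apply/andP; split.
    rewrite powR_eq1 (lt_eqF e1) ltNge (ltW e0) /= gt_eqF //; exact: gam0.
  have a01 : (0 < eps) && (eps <= 1) by rewrite e0 (ltW e1).
  by have := ger_powR a01 (ltW gam0); rewrite powRr0.
pose v k := Kc / C2 * q ^+ k.
have hv : (v n) @[n --> \oo] --> (0 : R).
  rewrite -(mulr0 (Kc / C2)); apply: cvgMr; apply: cvg_expr; rewrite ger0_norm //.
have key k : 0 <= u k <= v k.
  pose r := eps ^+ k.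
  have r0 : 0 < r by apply: exprn_gt0.
  have r1 : r <= 1 by apply: exprn_ile1; lra.
  have mB := eball_mb x r.
  have mBE : measurable (eball x r `&` Eset bb) by apply: measurableI => //; exact: Eset_mb.
  have numE : mseq k (eball x r `&` Eset bb) = NSb (eball x r `&` Eset bb).
    by rewrite mseqE (LS_AE0 bb0 bb2 mB) mule0 add0e.
  have num_le : (mseq k (eball x r `&` Eset bb) <= (Kc * r `^ sx)%:E)%E.
    rewrite numE; apply: le_trans (NSb_ball x r0).
    by apply: (@le_measure _ _ _ NSb); rewrite ?inE // => y [].
  have num_ge0 := measure_ge0 (mseq k) (eball x r `&` Eset bb).
  have num_fin : mseq k (eball x r `&` Eset bb) \is a fin_num.
    by rewrite ge0_fin_numE // (le_lt_trans num_le) // ltry.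
  have den_ge : ((C2 * r `^ (2 - th))%:E <= mseq k (eball x r))%E.
    apply: le_trans (HM3 k x r (Eset_S Ex) (lexx _) r1).
    rewrite pw3 // (_ : C2 * (r ^+ 2 / r `^ th) = C2 / r `^ th * r ^+ 2); last first.
      by rewrite mulrA mulrAC.
    rewrite EFinM; apply: lee_wpmul2l.
      by rewrite lee_fin; apply: divr_ge0; [exact: ltW|exact: powR_ge0].
    exact: leb2_ball_ge (ltW r0).
  have den_fin : mseq k (eball x r) \is a fin_num.
    by rewrite ge0_fin_numE ?measure_ge0 // (le_lt_trans (mseq_le k mB)) // ltry.
  have pr0 : 0 < r `^ (2 - th) by apply: powR_gt0.
  have D0 : 0 < fine (mseq k (eball x r)).
    rewrite -lte_fin fineK //; apply: lt_le_trans den_ge; rewrite lte_fin.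
    exact: mulr_gt0.
  have Dge : C2 * r `^ (2 - th) <= fine (mseq k (eball x r)) by rewrite -lee_fin fineK.
  have Nle : fine (mseq k (eball x r `&` Eset bb)) <= Kc * r `^ sx by rewrite -lee_fin fineK.
  have N0 : 0 <= fine (mseq k (eball x r `&` Eset bb)) by rewrite -lee_fin fineK.
  have ve : v k * (C2 * r `^ (2 - th)) = Kc * r `^ sx.
    have hq : q ^+ k = r `^ gam.
      rewrite /q /r -powR_mulrn ?powR_ge0 // -powRrM.
      by rewrite -[eps ^+ k]powR_mulrn ?(ltW e0) // -powRrM mulrC.
    have hs : r `^ gam * r `^ (2 - th) = r `^ sx.
      rewrite -powRD; last by apply/implyP => _; exact: lt0r_neq0.
      by congr (_ `^ _); rewrite /gam; ring.
    rewrite /v hq -hs; field; exact: lt0r_neq0.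
  have v0 : 0 <= v k by apply: mulr_ge0; [apply: divr_ge0 => //; [exact: Kc_ge0|exact: ltW]|exact: exprn_ge0].
  apply/andP; split; first by apply: divr_ge0 => //; exact: ltW.
  rewrite /u ler_pdivrMr //.
  nra.
have hu : (u n) @[n --> \oo] --> (0 : R).
  apply: (@squeeze_cvgr _ _ _ _ (cst 0) v) => //; last exact: cvg_cst.
  by apply: nearW => n; exact: key.
have hE : ((u n)%:E) @[n --> \oo] --> (0%:E : \bar R).
  by apply: cvg_EFin => //; apply: nearW.
exact: (cvg_limn_einf_sup hE).2.
Qed.


Lemma notstr : ~ inMstr th (@segS R) mseq.
Proof.
move=> [_ [eps [/andP[e0 e1] [[_ [_ [[C2 C2p HM3] _]]] M5]]]].
have := M5 (Eset bb) (Eset_mb bb) (@Eset_S _ bb).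
case => N [mN N0 sub].
have EN : Eset bb `<=` N.
  move=> x Ex; apply: sub => /= H.
  by have := H Ex; rewrite (lim0 e0 e1 C2p HM3 Ex) ltxx.
have h1 : (mseq 0 (Eset bb) <= mseq 0 N)%E.
  by apply: (@le_measure _ _ _ (mseq 0)); rewrite ?inE //; exact: Eset_mb.
have h2 : (NSb (Eset bb) <= mseq 0 (Eset bb))%E by exact: mseq_ge_NS.
have h3 : NSb (Eset bb) = 1%E.
  by rewrite /NSb -(NS_setT bb) -[in RHS](NS_AE bb0 bb2 setT) setTI.
move: (le_trans h2 h1); rewrite h3 N0 lee_fin; lra.
Qed.

End main.

Theorem mainTheorem10 (R : realType) (theta : R) :
  1 < theta < 2 ->
  exists m : nat -> {measure set (R * R) -> \bar R},
    inM theta (@segS R) m /\ ~ inMstr theta (@segS R) m.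
Proof.
move=> /andP[h1 h2]; exists (mseq h1 h2); split; last exact: notstr.
split; first exact: mseq_ism.
exists 2^-1; split; last exact: condM_ok.
by rewrite invr_gt0 /= invf_lt1 //; lra.
Qed.
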